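(* Let $T$ be a set of $n$ transactions with a nonempty symmetric irreflexive conflict relation $\bowtie$. Let $M=\min_\pi p(\pi)$ over all total orders $\pi$ of $T$, and let $ch$ be the maximum number $m$ such that there exist distinct transactions $tx_1,\dots,tx_m$ with $tx_1\bowtie tx_2\bowtie\cdots\bowtie tx_m$. Then the set of concurrency levels $\{n/p(\pi):\pi \text{ a total order of } T\}$ has at least $\alpha=\left\lceil \frac{ch-(M-1)}{M-1}\right\rceil$ distinct elements.
   Context: A set of transactions is conflict-free if no two of its elements conflict. For a total order $\pi$ of $T$, a $\pi$-respecting phase sequence is an ordered partition $(P_1,\dots,P_m)$ of $T$ into conflict-free sets (phases) such that whenever $tx\bowtie tx'$ and $tx$ precedes $tx'$ in $\pi$, the phase containing $tx$ has a smaller index than the phase containing $tx'$. $p(\pi)$, the necessary number of phases for execution given $\pi$, is the minimum length $m$ of a $\pi$-respecting phase sequence, and $n/p(\pi)$ is the concurrency level of $\pi$. *)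

(* Defs.v *)
From mathcomp Require Import all_boot all_order all_algebra.
Set Implicit Arguments. Unset Strict Implicit. Unset Printing Implicit Defensive.
Import Order.TTheory GRing.Theory Num.Theory.

(* A total order pi of T is represented by its ranking, an injective
   (hence bijective) map r : T -> 'I_n; tx precedes tx' in pi iff r tx < r tx'. *)
Section Phases.
Variables (T : finType) (e : rel T).

Definition total_order (r : {ffun T -> 'I_#|T|}) : bool := injectiveb r.

(* (P_1,...,P_m) given by f : T -> 'I_m (P_{i+1} = f^-1(i)): an ordered
   partition into nonempty conflict-free phases respecting r. *)
Definition respecting_phase_seq (r : {ffun T -> 'I_#|T|}) (m : nat)
    (f : {ffun T -> 'I_m}) : bool :=
  [&& [forall i : 'I_m, exists x, f x == i],
      [forall x, forall y, ((x != y) && (f x == f y)) ==> ~~ e x y] &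
      [forall x, forall y, (e x y && (r x < r y)) ==> (f x < f y)]].

Definition has_phase_seq (r : {ffun T -> 'I_#|T|}) (m : nat) : bool :=
  [exists f : {ffun T -> 'I_m}, respecting_phase_seq r f].

(* p(pi): least m admitting a pi-respecting phase sequence of length m
   (such an m <= n always exists for a total order, e.g. m = n). *)
Definition nphases (r : {ffun T -> 'I_#|T|}) : nat :=
  find (has_phase_seq r) (iota 0 #|T|.+1).

Definition Mmin : nat := \big[minn/#|T|]_(r | total_order r) nphases r.

Definition has_chain (m : nat) : bool :=
  [exists t : m.-tuple T, uniq t && sorted e t].

Definition ch : nat := \max_(m < #|T|.+1 | has_chain m) m.

Definition concurrency_levels : seq rat :=
  undup [seq (#|T|%:Q / (nphases r)%:Q)%R
        | r <- enum [pred r : {ffun T -> 'I_#|T|} | total_order r]].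

Definition alpha : int :=
  Num.ceil ((ch%:Q - (Mmin%:Q - 1)) / (Mmin%:Q - 1))%R.
End Phases.

(* Main.v *)
Require Import Defs.
From mathcomp Require Import all_boot all_order all_algebra.
From mathcomp Require Import zify lra.
Import Order.TTheory GRing.Theory Num.Theory.
Set Implicit Arguments. Unset Strict Implicit. Unset Printing Implicit Defensive.

Section Proof.
Variables (T : finType) (e : rel T).
Local Notation n := #|T|.

Definition weak (r : {ffun T -> 'I_n}) (m : nat) (f : {ffun T -> 'I_m}) : bool :=
  [forall x, forall y, ((x != y) && (f x == f y)) ==> ~~ e x y] &&
  [forall x, forall y, (e x y && (r x < r y)) ==> (f x < f y)].

Lemma weakP (r : {ffun T -> 'I_n}) m (f : {ffun T -> 'I_m}) :
  reflect ((forall x y, x != y -> f x = f y -> ~~ e x y) /\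
           (forall x y, e x y -> r x < r y -> f x < f y)) (weak r f).
Proof.
apply: (iffP andP) => [[/forallP H1 /forallP H2]|[H1 H2]]; split.
- by move=> x y xy fxy; have /forallP/(_ y) := H1 x; rewrite xy fxy eqxx /=.
- by move=> x y exy rxy; have /forallP/(_ y) := H2 x; rewrite exy rxy.
- apply/forallP => x; apply/forallP => y; apply/implyP => /andP[xy /eqP fxy].
  exact: H1.
- apply/forallP => x; apply/forallP => y; apply/implyP => /andP[exy rxy].
  exact: H2.
Qed.

Lemma strong_weak (r : {ffun T -> 'I_n}) m (f : {ffun T -> 'I_m}) : respecting_phase_seq e r f -> weak r f.
Proof. by case/and3P => _ H1 H2; rewrite /weak H1 H2. Qed.

Section Cnt.
Variables (m : nat) (S : {set 'I_m}).
Definition cnt (i : 'I_m) := #|[set j in S | j < i]|.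

Lemma cnt_lt (i1 i2 : 'I_m) : i1 \in S -> i1 < i2 -> cnt i1 < cnt i2.
Proof.
move=> i1S lt12; apply: proper_card; apply/properP; split.
  apply/subsetP => j; rewrite !inE => /andP[-> /= ji]; exact: ltn_trans ji lt12.
by exists i1; rewrite !inE ?i1S ?lt12 // ltnn andbF.
Qed.

Lemma cnt_ltS i : i \in S -> cnt i < #|S|.
Proof.
move=> iS; apply: proper_card; apply/properP; split.
  by apply/subsetP => j; rewrite !inE => /andP[].
by exists i; rewrite // !inE ltnn andbF.
Qed.

Lemma cnt_leS i : cnt i <= #|S|.
Proof. by apply: subset_leq_card; apply/subsetP => j; rewrite !inE => /andP[]. Qed.
End Cnt.

Lemma compress (r : {ffun T -> 'I_n}) m (f : {ffun T -> 'I_m}) : weak r f ->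
  exists2 k, k <= m & (k <= n) && has_phase_seq e r k.
Proof.
move/weakP=> [H1 H2].
pose S := f @: T.
have Hg x : cnt S (f x) < #|S| by apply: cnt_ltS; apply: imset_f.
pose g := [ffun x => Ordinal (Hg x)].
have gE x : (g x : nat) = cnt S (f x) by rewrite ffunE.
have mono x y : f x < f y -> g x < g y.
  by move=> fxy; rewrite !gE; apply: cnt_lt => //; apply: imset_f.
exists #|S|.
  by apply: leq_trans (max_card _) _; rewrite card_ord.
apply/andP; split; first by rewrite (leq_trans (leq_imset_card _ _)) // max_card.
apply/existsP; exists g; apply/and3P; split.
- apply/forallP => j.
  pose phi (i : 'I_m) : 'I_#|S|.+1 := Ordinal (cnt_leS S i : cnt S i < #|S|.+1).
  have phi_inj : {in S &, injective phi}.
    move=> i1 i2 i1S i2S /(congr1 val) /= eq12; apply/val_inj => /=.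
    case: (ltngtP i1 i2) => // [lt|lt].
      by have := cnt_lt i1S lt; rewrite eq12 ltnn.
    by have := cnt_lt i2S lt; rewrite eq12 ltnn.
  have sub : phi @: S \subset [set~ ord_max].
    apply/subsetP => _ /imsetP[i iS ->]; rewrite !inE; apply/eqP => /(congr1 val) /=.
    by move=> E; have := cnt_ltS iS; rewrite E ltnn.
  have Eq : phi @: S = [set~ ord_max].
    apply/eqP; rewrite eqEcard sub /= cardsC1 (card_in_imset phi_inj).
    by rewrite card_ord.
  have : widen_ord (leqnSn _) j \in phi @: S.
    by rewrite Eq !inE; apply/eqP => /(congr1 val) /= E; have := ltn_ord j; rewrite E ltnn.
  case/imsetP => i /imsetP[x _ ->] /(congr1 val) /= E.
  by apply/existsP; exists x; apply/eqP/val_inj; rewrite /= gE.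
- apply/forallP => x; apply/forallP => y; apply/implyP => /andP[xy /eqP gxy].
  apply: H1 => //; apply/val_inj; case: (ltngtP (f x) (f y)) => // lt.
    by have := mono _ _ lt; rewrite gxy ltnn.
  by have := mono _ _ lt; rewrite gxy ltnn.
- apply/forallP => x; apply/forallP => y; apply/implyP => /andP[exy rxy].
  exact/mono/H2.
Qed.


Lemma np_le (r : {ffun T -> 'I_n}) m (f : {ffun T -> 'I_m}) : weak r f -> nphases e r <= m.
Proof.
case/compress => k km /andP[kn hk]; apply: leq_trans km.
rewrite leqNgt; apply/negP => /(before_find 0).
by rewrite nth_iota ?add0n ?ltnS // hk.
Qed.

Lemma total_weak (r : {ffun T -> 'I_n}) : total_order r -> weak r r.
Proof.
move/injectiveP => ri; apply/weakP; split => [x y xy rxy|x y _ //].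
by rewrite (ri _ _ rxy) eqxx in xy.
Qed.

Lemma np_spec (r : {ffun T -> 'I_n}) : total_order r ->
  has_phase_seq e r (nphases e r) /\ nphases e r <= n.
Proof.
move/total_weak/compress => [k _ /andP[kn hk]].
have hs : has (has_phase_seq e r) (iota 0 n.+1).
  by apply/hasP; exists k; rewrite // mem_iota add0n ltnS.
have := nth_find 0 hs; rewrite has_find size_iota in hs.
by rewrite nth_iota // add0n => ->; split.
Qed.

Lemma np_chain (r : {ffun T -> 'I_n}) (l : seq T) : total_order r ->
  sorted e l -> sorted (fun x y => r x < r y) l -> size l <= nphases e r.
Proof.
move=> /np_spec [/existsP [f /strong_weak /weakP [_ H2]] _] se sr.
have sf : sorted (fun x y => f x < f y) l.
  have := sr; rewrite -(andTb (sorted _ l)) -se -sorted_relI.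
  by apply: sub_sorted => x y /andP[]; apply: H2.
have : sorted (fun a b : 'I_(nphases e r) => a < b) (map f l) by rewrite sorted_map.
have tr : transitive (fun a b : 'I_(nphases e r) => a < b).
  by move=> ? ? ?; apply: ltn_trans.
move/(sorted_uniq tr (fun a => ltnn _)) => /card_uniqP; rewrite size_map => <-.
by rewrite -[X in _ <= X]card_ord max_card.
Qed.


Definition mtfv (r : {ffun T -> 'I_n}) (v x : T) : nat :=
  if x == v then 0 else if r x < r v then (r x).+1 else r x.

Definition mtf (r : {ffun T -> 'I_n}) (v : T) : {ffun T -> 'I_n} :=
  [ffun x => insubd (r x) (mtfv r v x)].

Lemma mtfE r v x : (mtf r v x : nat) = mtfv r v x.
Proof.
rewrite ffunE val_insubd ifT // /mtfv; have := ltn_ord (r x); have := ltn_ord (r v).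
move=> h1 h2; case: (x == v); first lia.
by case: (ltnP (r x) (r v)) => h3; lia.
Qed.

Lemma rneq (r : {ffun T -> 'I_n}) x y : total_order r -> x != y -> (r x : nat) != r y.
Proof.
move/injectiveP => ri xy; apply/negP => /eqP/val_inj/ri/eqP; exact/negP.
Qed.

Lemma mtf_total r v : total_order r -> total_order (mtf r v).
Proof.
move=> tr; apply/injectiveP => x y /(congr1 (@nat_of_ord _)); rewrite !mtfE /mtfv.
case: (x =P y) => // /eqP xy.
have := rneq tr xy.
case: (x =P v) => [->|/eqP xv]; case: (y =P v) => [->|/eqP yv].
- by rewrite eqxx.
- have := rneq tr yv; case: ifP; lia.
- have := rneq tr xv; case: ifP; lia.
- have := rneq tr xv; have := rneq tr yv; do 2 case: ifP; lia.
Qed.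

Lemma mtf_rel r v x y : total_order r -> x != v -> y != v ->
  (mtf r v x < mtf r v y) = (r x < r y).
Proof.
move=> tr xv yv; have := rneq tr xv; have := rneq tr yv.
rewrite !mtfE /mtfv (negbTE xv) (negbTE yv).
by do 2 case: ifP; lia.
Qed.

Lemma mtf_first r v y : total_order r -> y != v -> mtf r v v < mtf r v y.
Proof.
move=> tr yv; have := rneq tr yv; rewrite !mtfE /mtfv eqxx (negbTE yv).
case: ifP; lia.
Qed.

Lemma mtf_step r v : total_order r -> nphases e (mtf r v) <= (nphases e r).+1.
Proof.
move=> tr; have [/existsP [f /strong_weak /weakP [H1 H2]] _] := np_spec tr.
pose f' := [ffun x => if x == v then ord0 else lift ord0 (f x)].
apply: (@np_le _ _ f'); apply/weakP; split.
- move=> x y xy; rewrite !ffunE.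
  case: (x =P v) => [?|/eqP xv]; case: (y =P v) => [?|/eqP yv]; subst.
  + by rewrite eqxx in xy.
  + by move/(congr1 (@nat_of_ord _)); rewrite lift0.
  + by move/(congr1 (@nat_of_ord _)); rewrite lift0.
  + by move/lift_inj; apply: H1.
- move=> x y exy rxy; rewrite !ffunE.
  case: (x =P v) => [?|/eqP xv]; case: (y =P v) => [?|/eqP yv]; subst.
  + by rewrite ltnn in rxy.
  + by rewrite lift0.
  + by rewrite !mtfE /mtfv eqxx in rxy.
  + rewrite !lift0 ltnS; apply: H2 => //.
    by rewrite -(mtf_rel tr xv yv).
Qed.


Fixpoint build (r0 : {ffun T -> 'I_n}) (l : seq T) : {ffun T -> 'I_n} :=
  if l is v :: l' then mtf (build r0 l') v else r0.

Lemma build_total r0 l : total_order r0 -> total_order (build r0 l).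
Proof. by move=> tr; elim: l => //= v l IH; apply: mtf_total. Qed.

Lemma build_sorted r0 l : total_order r0 -> uniq l ->
  sorted (fun x y => build r0 l x < build r0 l y) l.
Proof.
move=> tr; elim: l => // v l IH /andP[vl ul] /=.
have trl := build_total l tr.
move: trl; case: l IH vl ul => // w l IH vl ul trl /=; apply/andP; split.
  by apply: (mtf_first trl); apply/eqP => wv; rewrite wv mem_head in vl.
apply: (@sub_in_path _ (predC1 v)); last by apply: IH.
  by move=> x y xv yv; rewrite (mtf_rel trl).
by apply/allP => x xl; apply/eqP => xv; rewrite -xv xl in vl.
Qed.

End Proof.

Lemma ivt (a : nat -> nat) c L : (forall i, i < c -> a i <= (a i.+1).+1) ->
  a c <= L -> L <= a 0 -> exists2 i, i <= c & a i = L.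
Proof.
elim: c a => [|c IH] a H Hc H0; first by exists 0 => //; apply/eqP; rewrite eqn_leq H0 Hc.
case: (leqP L (a 1)) => h.
  have [i ic ai] := IH (fun i => a i.+1) (fun i ic => H i.+1 ic) Hc h.
  by exists i.+1.
exists 0 => //; have := H 0 (ltn0Sn _); lia.
Qed.

Lemma levels_bound (T : finType) (e : rel T) (x0 : T) :
  (ch e).+1 - Mmin e <= size (concurrency_levels e).
Proof.
set n := #|T|.
have n0 : 0 < n by apply/card_gt0P; exists x0.
have [r0 tr0 r0M] : exists2 r0, total_order r0 & nphases e r0 <= Mmin e.
  rewrite /Mmin; apply: (big_ind (fun m => exists2 r0, total_order r0 & nphases e r0 <= m)).
  - pose rE : {ffun T -> 'I_n} := [ffun x => enum_rank x].
    have trE : total_order rE.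
      by apply/injectiveP => x y; rewrite !ffunE; apply: enum_rank_inj.
    by exists rE => //; case: (np_spec e trE).
  - move=> a b [ra ta ha] [rb tb hb]; case: (leqP a b) => ab.
      by exists ra => //; rewrite (minn_idPl ab).
    by exists rb => //; rewrite (minn_idPr (ltnW ab)).
  - by move=> r tr; exists r.
have hc : has_chain e (ch e).
  rewrite /ch; apply: (big_ind (has_chain e)) => //.
  - by apply/existsP; exists [tuple].
  - by move=> a b ha hb; case: (leqP a b).
set c := ch e in hc *; set M := Mmin e in r0M *.
case/existsP: hc => t /andP[ut st].
pose R i := build r0 (drop i t).
have tR i : total_order (R i) by apply: build_total.
have step i : i < c -> nphases e (R i) <= (nphases e (R i.+1)).+1.
  move=> ic; rewrite /R (drop_nth x0) ?size_tuple //=; apply: mtf_step; exact: build_total.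
have Rc : R c = r0 by rewrite /R drop_oversize ?size_tuple.
have R0 : c <= nphases e (R 0).
  rewrite /R drop0 -{1}(size_tuple t); apply: np_chain => //.
    exact: build_total.
  exact: build_sorted.
have hit L : M <= L <= c -> exists2 r, total_order r & nphases e r = L.
  case/andP => ML Lc.
  have hc0 : nphases e (R c) <= L by rewrite Rc; apply: leq_trans ML.
  have [i _ <-] := @ivt (fun i => nphases e (R i)) c L step hc0 (leq_trans Lc R0).
  by exists (R i).
pose s := [seq (n%:Q / L%:Q)%R | L : nat <- iota M (c.+1 - M)].
have -> : c.+1 - M = size s by rewrite size_map size_iota.
apply: uniq_leq_size.
  rewrite map_inj_in_uniq ?iota_uniq // => a b _ _ /=.
  have nq : (n%:Q != 0)%R by rewrite pnatr_eq0 -lt0n.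
  by move/(mulfI nq)/invr_inj/eqP; rewrite eqr_nat => /eqP.
move=> q /mapP [L]; rewrite mem_iota => /andP[ML Lc] ->.
have hL : M <= L <= c by apply/andP; split => //; lia.
have [r tr <-] := hit L hL.
rewrite mem_undup; apply/mapP; exists r => //; by rewrite mem_enum.
Qed.

Theorem theorem6 (T : finType) (e : rel T)
  (e_sym : symmetric e) (e_irr : irreflexive e) (e_ne : exists x y, e x y) :
  (alpha e <= (size (concurrency_levels e))%:Z)%R.
Proof.
case: e_ne => x0 _.
have hK := levels_bound e x0.
rewrite /alpha; set c := ch e in hK *; set M := Mmin e in hK *.
set s := size _ in hK *.
rewrite Num.Theory.ceil_le_int.
apply: (@le_trans _ _ ((((c.+1 - M)%N)%:Z)%:~R)%R); last by rewrite -!pmulrn ler_nat.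
rewrite -!pmulrn.
case: M hK => [|[|d]] hK.
- rewrite subn0 -addn1 natrD sub0r invrN1 mulrN1.
  have : ((0 : rat) <= c%:R)%R by rewrite ler0n.
  lra.
- by rewrite subrr invr0 mulr0.
- have d0 : ((0 : rat) < d.+2%:R - 1)%R by rewrite -natr1 addrK ltr0n.
  rewrite ler_pdivrMr //.
  case: (leqP d.+2 c.+1) => h.
    rewrite natrB // -!natr1.
    have : ((0 : rat) <= c%:R)%R by rewrite ler0n.
    have : ((0 : rat) <= d%:R)%R by rewrite ler0n.
    have : ((d.+2%:R : rat) <= c%:R + 1)%R by rewrite natr1 ler_nat.
    rewrite -!natr1. nra.
  rewrite (eqP (ltnW h)) -!natr1.
  have : ((c%:R : rat) <= d%:R + 1)%R by rewrite natr1 ler_nat; lia.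
  lra.
Qed.
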